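(* Let $y_1, \ldots, y_n \in \mathfrak m$ be a minimal system of generators of $\mathfrak m$, so $R = k[[y_1, \ldots, y_n]]$, and let $\widetilde y_1, \ldots, \widetilde y_n \in R$ be elements with $y_i \equiv \widetilde y_i \pmod{t^{a_n+1}}$ (i.e. $v(y_i - \widetilde y_i) \ge a_n + 1$) for all $i$. Then $R = k[[\widetilde y_1, \ldots, \widetilde y_n]]$.
   Context: Let $k$ be a field and let $(R,\mathfrak m)$ be a complete local noetherian domain of dimension $1$ containing $k$ with $R/\mathfrak m = k$, with normalization $\overline R$ having residue field $k$, so $\overline R = k[[t]]$ and $R \subseteq k[[t]]$ is finite birational. Let $v$ be the $t$-adic valuation, $v(0)=\infty$. For $A \subseteq k((t))$ let $v(A) = \{v(f): f\in A\setminus\{0\}\}$. The Herzog–Kunz sequence of $R$ is $v(\mathfrak m)\setminus v(\mathfrak m^2)$ listed increasingly as $a_1 < \cdots < a_n$ (with $n = \mathrm{edim}(R)$). For $y_i\in\mathfrak m$, $k[[y_1,\ldots,y_n]]$ is the image of $k[[Y_1,\ldots,Y_n]]\to k[[t]]$, $Y_i\mapsto y_i$. *)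

(* Defs.v *)
From Stdlib Require List.
From mathcomp Require Import all_boot all_algebra.
Set Implicit Arguments. Unset Strict Implicit. Unset Printing Implicit Defensive.
Import GRing.Theory.
Local Open Scope ring_scope.

(* an element of k[[t]]: f = sum_m f m * t^m *)
Definition series (k : fieldType) := nat -> k.

Section Series.
Variable k : fieldType.

Definition szero : series k := fun _ => 0.
Definition sone : series k := fun m => (m == 0%N)%:R.
Definition svar : series k := fun m => (m == 1%N)%:R.
Definition sadd (f g : series k) : series k := fun m => f m + g m.
Definition ssub (f g : series k) : series k := fun m => f m - g m.
Definition smul (f g : series k) : series k :=
  fun m => \sum_(i < m.+1) f i * g (m - i)%N.
Definition sexp (f : series k) (e : nat) : series k := iter e (smul f) sone.

Definition val_ge (f : series k) (a : nat) : Prop := forall j, (j < a)%N -> f j = 0.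
Definition has_val (f : series k) (a : nat) : Prop := val_ge f a /\ f a != 0.

Definition smonom (n : nat) (y : 'I_n -> series k) (e : 'I_n -> nat) : series k :=
  foldr (fun i acc => smul (sexp (y i) (e i)) acc) sone (enum 'I_n).

(* F(y_1,...,y_n) for F in k[[Y_1,...,Y_n]] (coefficients indexed by exponent
   vectors) and y_i with zero constant term: the coefficient of t^m only involves
   monomials whose exponents are all <= m. *)
Definition ssubst (n : nat) (F : {ffun 'I_n -> nat} -> k) (y : 'I_n -> series k)
  : series k :=
  fun m => \sum_(e : {ffun 'I_n -> 'I_m.+1})
             F [ffun i => nat_of_ord (e i)] * smonom y (fun i => nat_of_ord (e i)) m.

Definition in_kpow (n : nat) (y : 'I_n -> series k) (f : series k) : Prop :=
  exists F : {ffun 'I_n -> nat} -> k, f =1 ssubst F y.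

(* maximal ideal of a local subring R of k[[t]] with residue field k *)
Definition maxideal (R : series k -> Prop) (f : series k) : Prop := R f /\ f 0%N = 0.

Definition maxideal2 (R : series k -> Prop) (f : series k) : Prop :=
  exists s : seq (series k * series k),
    (forall p, List.In p s -> maxideal R p.1 /\ maxideal R p.2) /\
    f =1 foldr (fun p acc => sadd (smul p.1 p.2) acc) szero s.

Definition in_valset (A : series k -> Prop) (a : nat) : Prop :=
  exists f, A f /\ has_val f a.

Definition herzog_kunz (R : series k -> Prop) (a : nat) : Prop :=
  in_valset (maxideal R) a /\ ~ in_valset (maxideal2 R) a.

Definition in_ideal_gen (R : series k -> Prop) (n : nat) (P : pred 'I_n)
  (y : 'I_n -> series k) (f : series k) : Prop :=
  exists r : 'I_n -> series k, (forall i, R (r i)) /\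
    f =1 foldr (fun i acc => sadd (smul (r i) (y i)) acc) szero
           [seq i <- enum 'I_n | P i].

Definition minimal_generators (R : series k -> Prop) (n : nat)
  (y : 'I_n -> series k) : Prop :=
  (forall i, maxideal R (y i)) /\
  (forall f, maxideal R f -> in_ideal_gen R predT y f) /\
  (forall j : 'I_n, ~ (forall f, maxideal R f -> in_ideal_gen R (fun i => i != j) y f)).

Definition finite_over (R : series k -> Prop) : Prop :=
  exists (p : nat) (b : 'I_p -> series k), forall h : series k,
    exists r : 'I_p -> series k, (forall i, R (r i)) /\
      h =1 foldr (fun i acc => sadd (smul (r i) (b i)) acc) szero (enum 'I_p).

(* R subset k[[t]] is birational: every element of k[[t]] (hence of k((t)))
   is a quotient of elements of R *)
Definition birational (R : series k -> Prop) : Prop :=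
  forall h : series k, exists f g, R f /\ R g /\ ~ (g =1 szero) /\ f =1 smul h g.

End Series.

(* Main.v *)
From HB Require Import structures.
Require Import Defs.
From mathcomp Require Import all_boot all_algebra.
From mathcomp Require Import boolp zify.
Set Implicit Arguments. Unset Strict Implicit. Unset Printing Implicit Defensive.
Import GRing.Theory.
Local Open Scope ring_scope.

Section FPS.
Variable k : fieldType.
Definition fps := series k.
HB.instance Definition _ := Choice.copy fps (nat -> k).

Lemma fps_addA : associative (@sadd k).
Proof. by move=> f g h; apply: funext => m; rewrite /sadd addrA. Qed.
Lemma fps_addC : commutative (@sadd k).
Proof. by move=> f g; apply: funext => m; rewrite /sadd addrC. Qed.
Lemma fps_add0 : left_id (@szero k) (@sadd k).
Proof. by move=> f; apply: funext => m; rewrite /sadd /szero add0r. Qed.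
Definition sopp (f : series k) : series k := fun m => - f m.
Lemma fps_addN : left_inverse (@szero k) sopp (@sadd k).
Proof. by move=> f; apply: funext => m; rewrite /sadd /szero /sopp addNr. Qed.

HB.instance Definition _ := GRing.isZmodule.Build fps fps_addA fps_addC fps_add0 fps_addN.

Definition tr (f : series k) (N : nat) : {poly k} := \poly_(i < N) f i.

Lemma smul_tr f g N m : (m < N)%N -> smul f g m = (tr f N * tr g N)`_m.
Proof.
move=> mN; rewrite coefM /smul; apply: eq_bigr => i _.
rewrite /tr !coef_poly.
rewrite (leq_ltn_trans (leq_ord i) mN) (leq_ltn_trans (leq_subr i m) mN) //.
Qed.

Lemma coefM_low (p q p' q' : {poly k}) m :
  (forall i, (i <= m)%N -> p`_i = p'`_i) -> (forall i, (i <= m)%N -> q`_i = q'`_i) ->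
  (p * q)`_m = (p' * q')`_m.
Proof.
move=> hp hq; rewrite !coefM; apply: eq_bigr => i _.
by rewrite hp ?hq // ?leq_subr // -ltnS.
Qed.

Lemma fps_mulA : associative (@smul k).
Proof.
move=> f g h; apply: funext => m.
rewrite (smul_tr _ _ (ltnSn m)) [smul (smul f g) h m](smul_tr _ _ (ltnSn m)).
transitivity ((tr f m.+1 * (tr g m.+1 * tr h m.+1))`_m).
  apply: coefM_low => // i im; rewrite /tr coef_poly ltnS im.
  by rewrite (@smul_tr _ _ m.+1 i) ?ltnS //; apply: coefM_low => // j jm; rewrite !coef_poly !ltnS jm (leq_trans jm im).
rewrite mulrA; apply: coefM_low => // i im; rewrite /tr coef_poly ltnS im.
by rewrite (@smul_tr _ _ m.+1 i) ?ltnS //; apply: coefM_low => // j jm; rewrite !coef_poly !ltnS jm (leq_trans jm im).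
Qed.

Lemma fps_mulC : commutative (@smul k).
Proof. by move=> f g; apply: funext => m; rewrite !(smul_tr _ _ (ltnSn m)) mulrC. Qed.

Lemma fps_mul1 : left_id (@sone k) (@smul k).
Proof.
move=> f; apply: funext => m; rewrite /smul big_ord_recl /= /sone eqxx mul1r subn0.
by rewrite big1 ?addr0 // => i _; rewrite mul0r.
Qed.

Lemma fps_mulDl : left_distributive (@smul k) (@sadd k).
Proof.
move=> f g h; apply: funext => m; rewrite /smul /sadd -big_split /=.
by apply: eq_bigr => i _; rewrite mulrDl.
Qed.

Lemma fps_one_neq0 : (sone k : fps) != 0.
Proof.
apply/eqP => /(congr1 (fun f : fps => f 0%N)); rewrite /sone /=.
by move/eqP; rewrite oner_eq0.
Qed.

HB.instance Definition _ := GRing.Zmodule_isComNzRing.Build fps fps_mulA fps_mulC fps_mul1 fps_mulDl fps_one_neq0.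

Lemma fps_mulE (f g : fps) : f * g = smul f g. Proof. by []. Qed.
Lemma fps_addE (f g : fps) : f + g = sadd f g. Proof. by []. Qed.
Lemma fps_oneE : (1 : fps) = sone k. Proof. by []. Qed.
Lemma fps_zeroE : (0 : fps) = szero k. Proof. by []. Qed.
Lemma fps_oppE (f : fps) : - f = sopp f. Proof. by []. Qed.
Lemma fps_subE (f g : fps) : f - g = ssub f g. Proof. by []. Qed.

Definition cf (m : nat) (f : fps) : k := f m.
Lemma cf_sum I (r : seq I) (P : pred I) (F : I -> fps) m :
  (\sum_(i <- r | P i) F i) m = \sum_(i <- r | P i) F i m.
Proof.
by elim/big_rec2: _ => // i y1 y2 _ <-.
Qed.
Lemma cfD (f g : fps) m : (f + g) m = f m + g m. Proof. by []. Qed.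
Lemma cfN (f : fps) m : (- f) m = - f m. Proof. by []. Qed.
Lemma cfB (f g : fps) m : (f - g) m = f m - g m. Proof. by []. Qed.
Lemma cf0 m : (0 : fps) m = 0. Proof. by []. Qed.
Lemma cfM (f g : fps) m : (f * g) m = \sum_(i < m.+1) f i * g (m - i)%N. Proof. by []. Qed.

Definition scst (c : k) : fps := fun m => if m == 0%N then c else 0.
Lemma cf_scst c (f : fps) m : (scst c * f) m = c * f m.
Proof.
rewrite cfM big_ord_recl /= subn0 big1 ?addr0 // => i _.
by rewrite /scst /= mul0r.
Qed.
Lemma scstM c d : scst (c * d) = scst c * scst d.
Proof. by apply: funext => m; rewrite cf_scst /scst; case: (m == 0%N); rewrite ?mulr0. Qed.
Lemma scstD c d : scst (c + d) = scst c + scst d.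
Proof. by apply: funext => m; rewrite cfD /scst; case: (m == 0%N); rewrite ?addr0. Qed.
Lemma scst1 : scst 1 = 1.
Proof. by apply: funext => m; rewrite /scst fps_oneE /sone; case: (m == 0%N). Qed.

Lemma vge_mul (f g : fps) a b : val_ge f a -> val_ge g b -> val_ge (f * g) (a + b).
Proof.
move=> hf hg j hj; rewrite cfM big1 // => i _.
case: (ltnP i a) => ia; first by rewrite hf // mul0r.
rewrite hg ?mulr0 //; rewrite ltn_subLR; last by rewrite -ltnS; case: i ia.
apply: leq_trans hj _; rewrite addnC; lia.
Qed.
Lemma vge_add (f g : fps) a : val_ge f a -> val_ge g a -> val_ge (f + g) a.
Proof. by move=> hf hg j hj; rewrite cfD hf ?hg ?addr0. Qed.
Lemma vge_opp (f : fps) a : val_ge f a -> val_ge (- f) a.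
Proof. by move=> hf j hj; rewrite cfN hf ?oppr0. Qed.
Lemma vge_sub (f g : fps) a : val_ge f a -> val_ge g a -> val_ge (f - g) a.
Proof. by move=> hf hg; apply: vge_add => //; apply: vge_opp. Qed.
Lemma vge_le (f : fps) a b : (b <= a)%N -> val_ge f a -> val_ge f b.
Proof. by move=> ba hf j hj; apply: hf; apply: leq_trans hj ba. Qed.
Lemma vge0 (f : fps) : val_ge f 0.
Proof. by []. Qed.
Lemma vge_zero a : val_ge (0 : fps) a.
Proof. by []. Qed.
Lemma vge_scst c (f : fps) a : val_ge f a -> val_ge (scst c * f) a.
Proof. by move=> hf j hj; rewrite cf_scst hf ?mulr0. Qed.
Lemma vge_exp (f : fps) a p : val_ge f a -> val_ge (f ^+ p) (a * p).
Proof.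
move=> hf; elim: p => [|p ih]; first by rewrite muln0.
by rewrite exprS mulnS; apply: vge_mul.
Qed.
Lemma vge_sum I (r : seq I) (P : pred I) (F : I -> fps) a :
  (forall i, P i -> val_ge (F i) a) -> val_ge (\sum_(i <- r | P i) F i) a.
Proof.
move=> h; elim/big_rec: _ => [|i x Pi hx]; first exact: vge_zero.
by apply: vge_add => //; apply: h.
Qed.

Lemma lead_mul (f g : fps) a b : val_ge f a -> val_ge g b ->
  (f * g) (a + b)%N = f a * g b.
Proof.
move=> hf hg; have ha : (a < (a + b).+1)%N by rewrite ltnS leq_addr.
rewrite cfM (bigD1 (Ordinal ha)) //= addKn big1 ?addr0 // => i /eqP hi.
case: (ltnP i a) => ia; first by rewrite hf // mul0r.
rewrite hg ?mulr0 //.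
have : (a < i)%N by rewrite ltn_neqAle ia andbT eq_sym; apply/eqP => h; apply: hi; apply: val_inj.
move=> ai; have := ltn_ord i; lia.
Qed.

Lemma has_val_mul (f g : fps) a b : has_val f a -> has_val g b -> has_val (f * g) (a + b).
Proof.
move=> [hf fa] [hg gb]; split; first exact: vge_mul.
by rewrite lead_mul // mulf_neq0.
Qed.

Lemma sexpE (f : series k) e : sexp f e = (f : fps) ^+ e.
Proof. by elim: e => [|e ih] //=; rewrite exprS -ih. Qed.

End FPS.



Section MS.
Variable k : fieldType.
Variable n : nat.
Notation fps := (fps k).
Definition expo := {ffun 'I_n -> nat}.
Definition ofo N (e : {ffun 'I_n -> 'I_N}) : expo := [ffun i => nat_of_ord (e i)].
Definition BS N (X : expo -> k) : k := \sum_(e : {ffun 'I_n -> 'I_N}) X (ofo e).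
Definition deg (e : expo) : nat := \sum_i e i.

Lemma BS_widen N K X : (K.+1 <= N)%N -> (forall e : expo, (exists i, K.+1 <= e i)%N -> X e = 0) ->
  BS N X = BS K.+1 X.
Proof.
move=> KN hX; rewrite /BS.
rewrite (bigID (fun e : {ffun 'I_n -> 'I_N} => [forall i, e i < K.+1]%N)) /=.
rewrite [X in _ + X]big1 ?addr0; last first.
  move=> e; rewrite negb_forall => /existsP [i]; rewrite -leqNgt => hi.
  by apply: hX; exists i; rewrite /ofo ffunE.
pose h := fun e : {ffun 'I_n -> 'I_K.+1} => [ffun i => widen_ord KN (e i)].
pose h' := fun e : {ffun 'I_n -> 'I_N} => [ffun i => (inord (e i) : 'I_K.+1)].
rewrite (reindex_onto h h') /=; last first.
  move=> e /forallP he; apply/ffunP => i; rewrite !ffunE; apply: val_inj => /=.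
  by rewrite inordK.
apply: eq_big => e.
  apply/andP; split; first by apply/forallP => i; rewrite ffunE /=.
  apply/eqP/ffunP => i; rewrite !ffunE; apply: val_inj => /=; rewrite inordK //.
move=> _; congr X; apply/ffunP => i; rewrite !ffunE //.
Qed.

Lemma BS_same K K' X : (forall e : expo, (exists i, K.+1 <= e i)%N -> X e = 0) ->
  (forall e : expo, (exists i, K'.+1 <= e i)%N -> X e = 0) -> BS K.+1 X = BS K'.+1 X.
Proof.
move=> h1 h2; case: (leqP K K') => kk.
  by rewrite (@BS_widen K'.+1 K).
by rewrite (@BS_widen K.+1 K') // ltnW.
Qed.

Variable z : 'I_n -> fps.
Hypothesis z0 : forall i, z i 0%N = 0.

Lemma smonomE (e : 'I_n -> nat) : smonom z e = \prod_(i <- enum 'I_n) (z i) ^+ (e i).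
Proof.
rewrite /smonom; elim: (enum 'I_n) => [|i s ih] /=; first by rewrite big_nil.
by rewrite big_cons -ih sexpE.
Qed.

Lemma smonom_ext (e e' : 'I_n -> nat) : e =1 e' -> smonom z e = smonom z e'.
Proof. by move=> h; rewrite !smonomE; apply: eq_bigr => i _; rewrite h. Qed.

Lemma vge_z i : val_ge (z i) 1.
Proof. by case=> // _; apply: z0. Qed.

Lemma vge_smonom (e : 'I_n -> nat) : val_ge (smonom z e) (\sum_(i <- enum 'I_n) e i).
Proof.
rewrite smonomE; elim: (enum 'I_n) => [|i s ih]; first by rewrite !big_nil.
rewrite !big_cons; apply: vge_mul => //.
by have := vge_exp (p:=e i) (vge_z i); rewrite mul1n.
Qed.

Lemma deg_enum (e : expo) : \sum_(i <- enum 'I_n) e i = deg e.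
Proof. by rewrite /deg big_enum. Qed.

Lemma vge_smonom_deg (e : expo) : val_ge (smonom z e) (deg e).
Proof. by rewrite -deg_enum; apply: vge_smonom. Qed.

Lemma deg_ge (e : expo) i : (e i <= deg e)%N.
Proof. by rewrite /deg (bigD1 i) //= leq_addr. Qed.

Lemma ssubstE (F : expo -> k) m : ssubst F z m = BS m.+1 (fun e => F e * smonom z e m).
Proof.
rewrite /ssubst /BS; apply: eq_bigr => e _.
by rewrite (@smonom_ext (fun i => nat_of_ord (e i)) (ofo e)) // => i; rewrite ffunE.
Qed.

Lemma ssubst_N (F : expo -> k) m N : (m < N)%N ->
  ssubst F z m = BS N (fun e => F e * smonom z e m).
Proof.
move=> mN; rewrite ssubstE; case: N mN => // N mN.
apply: BS_same => e [i hi]; rewrite (@vge_smonom_deg e m) ?mulr0 //.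
  by apply: leq_trans hi (deg_ge e i).
by apply: leq_trans (leq_trans mN hi) (deg_ge e i).
Qed.


Lemma ssubst_add (F G : expo -> k) : ssubst (fun e => F e + G e) z = (ssubst F z : fps) + (ssubst G z : fps).
Proof.
apply: funext => m; rewrite cfD !ssubstE /BS -big_split /=.
by apply: eq_bigr => e _; rewrite mulrDl.
Qed.

Lemma ssubst_scal c (F : expo -> k) : ssubst (fun e => c * F e) z = scst c * (ssubst F z : fps).
Proof.
apply: funext => m; rewrite cf_scst !ssubstE /BS mulr_sumr.
by apply: eq_bigr => e _; rewrite mulrA.
Qed.

Lemma ssubst_zero : (ssubst (fun _ => 0) z : fps) = 0.
Proof. by apply: funext => m; rewrite ssubstE /BS big1 // => e _; rewrite mul0r. Qed.

Lemma ssubst_opp (F : expo -> k) : ssubst (fun e => - F e) z = - (ssubst F z : fps).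
Proof.
apply: funext => m; rewrite cfN !ssubstE /BS -sumrN.
by apply: eq_bigr => e _; rewrite mulNr.
Qed.

Lemma ssubst_sub (F G : expo -> k) : ssubst (fun e => F e - G e) z = (ssubst F z : fps) - (ssubst G z : fps).
Proof. by rewrite ssubst_add ssubst_opp. Qed.

Lemma ssubst_sum J (F : nat -> expo -> k) :
  ssubst (fun e => \sum_(j < J) F j e) z = \sum_(j < J) (ssubst (F j) z : fps).
Proof.
elim: J => [|J ih].
  rewrite big_ord0 -ssubst_zero; congr ssubst; apply: funext => e; by rewrite big_ord0.
rewrite big_ord_recr /= -ih -ssubst_add; congr ssubst; apply: funext => e.
by rewrite big_ord_recr.
Qed.

Lemma ssubst_ext (F G : expo -> k) : F =1 G -> ssubst F z = ssubst G z.
Proof. by move=> h; congr ssubst; apply: funext. Qed.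

Lemma ssubst_trunc (F G : expo -> k) m : (forall e, (deg e <= m)%N -> F e = G e) ->
  ssubst F z m = ssubst G z m.
Proof.
move=> h; rewrite !ssubstE; apply: eq_bigr => e _.
case: (leqP (deg (ofo e)) m) => hd; first by rewrite h.
by rewrite (@vge_smonom_deg (ofo e) m) ?mulr0.
Qed.

Definition mindeg (F : expo -> k) d := forall e, (deg e < d)%N -> F e = 0.

Lemma vge_ssubst F d : mindeg F d -> val_ge (ssubst F z) d.
Proof.
move=> h m md; rewrite ssubstE /BS big1 // => e _.
case: (ltnP (deg (ofo e)) d) => hd; first by rewrite h ?mul0r.
by rewrite (@vge_smonom_deg (ofo e) m) ?mulr0 //; apply: leq_trans md hd.
Qed.

Lemma ssubst_fin (F : expo -> k) N : (forall e : expo, (exists i, N.+1 <= e i)%N -> F e = 0) ->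
  (ssubst F z : fps) = \sum_(e : {ffun 'I_n -> 'I_N.+1}) scst (F (ofo e)) * (smonom z (ofo e) : fps).
Proof.
move=> hF; apply: funext => m; rewrite cf_sum ssubstE.
transitivity (BS N.+1 (fun e => F e * smonom z e m)); last first.
  by apply: eq_bigr => e _; rewrite cf_scst.
apply: BS_same => e [i hi].
  by rewrite (@vge_smonom_deg e m) ?mulr0 //; apply: leq_trans hi (deg_ge e i).
by rewrite hF ?mul0r //; exists i.
Qed.

Definition inordf N (x : expo) : {ffun 'I_n -> 'I_N.+1} := [ffun i => inord (x i)].

Lemma BS_pick N (x : expo) (Y : expo -> k) :
  BS N.+1 (fun e => if e == x then Y e else 0) = if [forall i, x i < N.+1]%N then Y x else 0.
Proof.
rewrite /BS; case: ifP => hx.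
  rewrite (bigD1 (inordf N x)) //= big1 ?addr0.
    have -> : ofo (inordf N x) = x.
      by apply/ffunP => i; rewrite !ffunE inordK //; move/forallP: hx; apply.
    by rewrite eqxx.
  move=> e he; case: eqP => // hex; case/eqP: he; apply/ffunP => i.
  by apply: val_inj; rewrite ffunE /= inordK -hex ffunE //.
rewrite big1 // => e _; case: eqP => // hex; move/negbT: hx; rewrite negb_forall.
by case/existsP => i; rewrite -hex ffunE ltn_ord.
Qed.


Definition addE (e1 e2 : expo) : expo := [ffun i => (e1 i + e2 i)%N].
Definition mmul (F G : expo -> k) (e : expo) : k :=
  BS (deg e).+1 (fun e1 => BS (deg e).+1 (fun e2 => if addE e1 e2 == e then F e1 * G e2 else 0)).

Lemma smonom_add e1 e2 : (smonom z (addE e1 e2) : fps) = (smonom z e1 : fps) * smonom z e2.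
Proof.
rewrite !smonomE -big_split /=; apply: eq_bigr => i _.
by rewrite ffunE exprD.
Qed.

Lemma addE_gt (e1 e2 e : expo) i : (e i < e1 i)%N \/ (e i < e2 i)%N -> (addE e1 e2 == e) = false.
Proof.
move=> h; apply/negbTE/eqP => he; move: h; rewrite -he ffunE; lia.
Qed.

Lemma mmul_N (F G : expo -> k) (e : expo) m : (forall i, e i <= m)%N ->
  mmul F G e = BS m.+1 (fun e1 => BS m.+1 (fun e2 => if addE e1 e2 == e then F e1 * G e2 else 0)).
Proof.
move=> hm; rewrite /mmul.
have H1 : forall e1 : expo, (exists i, e i < e1 i)%N ->
   forall K, BS K.+1 (fun e2 => if addE e1 e2 == e then F e1 * G e2 else 0) = 0.
  move=> e1 [i hi] K; rewrite /BS big1 // => e2 _; rewrite (@addE_gt _ _ _ i) //; by left.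
transitivity (BS (deg e).+1 (fun e1 => BS m.+1 (fun e2 => if addE e1 e2 == e then F e1 * G e2 else 0))).
  apply: eq_bigr => e1 _; apply: BS_same => e2 [i hi]; rewrite (@addE_gt _ _ _ i) //; right.
    by apply: leq_ltn_trans (deg_ge e i) hi.
  by apply: leq_ltn_trans (hm i) hi.
apply: BS_same => e1 [i hi]; apply: H1; exists i.
  by apply: leq_ltn_trans (deg_ge e i) hi.
by apply: leq_ltn_trans (hm i) hi.
Qed.

Lemma ssubst_mul (F G : expo -> k) :
  (ssubst (mmul F G) z : fps) = (ssubst F z : fps) * (ssubst G z : fps).
Proof.
apply: funext => m.
transitivity (BS m.+1 (fun e1 => BS m.+1 (fun e2 => F e1 * G e2 * smonom z (addE e1 e2) m))).
  rewrite ssubstE.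
  transitivity (BS m.+1 (fun e => BS m.+1 (fun e1 => BS m.+1 (fun e2 =>
       if addE e1 e2 == e then F e1 * G e2 * smonom z e m else 0)))).
    apply: eq_bigr => e _; rewrite (@mmul_N _ _ _ m); last by move=> i; rewrite ffunE -ltnS.
    rewrite /BS mulr_suml; apply: eq_bigr => e1 _; rewrite mulr_suml; apply: eq_bigr => e2 _.
    by case: ifP; rewrite ?mul0r.
  rewrite /BS exchange_big; apply: eq_bigr => e1 _; rewrite exchange_big; apply: eq_bigr => e2 _.
  transitivity (BS m.+1 (fun e => if e == addE (ofo e1) (ofo e2) then
       F (ofo e1) * G (ofo e2) * smonom z e m else 0)).
    by apply: eq_bigr => e _; rewrite eq_sym.
  rewrite BS_pick; case: ifP => // /negbT; rewrite negb_forall => /existsP [i].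
  rewrite -leqNgt => hi; rewrite (@vge_smonom_deg _ m) ?mulr0 //.
  by apply: leq_trans hi (deg_ge _ i).
rewrite cfM.
transitivity (\sum_(i < m.+1) BS m.+1 (fun e1 => BS m.+1 (fun e2 =>
   F e1 * G e2 * (smonom z e1 i * smonom z e2 (m - i)%N)))).
  symmetry; rewrite /BS exchange_big; apply: eq_bigr => e1 _.
  rewrite exchange_big; apply: eq_bigr => e2 _.
  by rewrite smonom_add cfM mulr_sumr.
apply: eq_bigr => i _.
rewrite (@ssubst_N F i m.+1) // (@ssubst_N G (m - i) m.+1) ?ltnS ?leq_subr //.
rewrite /BS mulr_suml; apply: eq_bigr => e1 _; rewrite mulr_sumr; apply: eq_bigr => e2 _.
by rewrite mulrACA.
Qed.


Lemma deg_addE e1 e2 : deg (addE e1 e2) = (deg e1 + deg e2)%N.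
Proof. by rewrite /deg -big_split /=; apply: eq_bigr => i _; rewrite ffunE. Qed.

Lemma mindeg_mul F G a b : mindeg F a -> mindeg G b -> mindeg (mmul F G) (a + b).
Proof.
move=> hF hG e he; rewrite /mmul /BS big1 // => e1 _; rewrite big1 // => e2 _.
case: eqP => // hx; have he' : (deg (ofo e1) + deg (ofo e2) < a + b)%N by rewrite -deg_addE hx.
case: (ltnP (deg (ofo e1)) a) => h1; first by rewrite hF ?mul0r.
by rewrite hG ?mulr0 //; lia.
Qed.

Lemma ssubst_delta (x : expo) : (ssubst (fun e => if e == x then 1 else 0) z : fps) = smonom z x.
Proof.
apply: funext => m; rewrite (@ssubst_N _ m (m + deg x).+1) ?ltnS ?leq_addr //.
transitivity (BS (m + deg x).+1 (fun e => if e == x then smonom z e m else 0)).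
  by apply: eq_bigr => e _; case: eqP; rewrite ?mul1r ?mul0r.
rewrite BS_pick; case: ifP => // /negbT; rewrite negb_forall => /existsP [i].
by rewrite ltnS -ltnNge; have := deg_ge x i; lia.
Qed.

Definition Vset d (g : fps) := exists H, mindeg H d /\ g = ssubst H z.

Lemma V_add d f g : Vset d f -> Vset d g -> Vset d (f + g).
Proof.
move=> [F [hF ->]] [G [hG ->]]; exists (fun e => F e + G e); split; last by rewrite ssubst_add.
by move=> e he; rewrite hF ?hG ?addr0.
Qed.
Lemma V_opp d f : Vset d f -> Vset d (- f).
Proof.
move=> [F [hF ->]]; exists (fun e => - F e); split; last by rewrite ssubst_opp.
by move=> e he; rewrite hF ?oppr0.
Qed.
Lemma V_sub d f g : Vset d f -> Vset d g -> Vset d (f - g).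
Proof. by move=> hf hg; apply: V_add => //; apply: V_opp. Qed.
Lemma V_scal d c f : Vset d f -> Vset d (scst c * f).
Proof.
move=> [F [hF ->]]; exists (fun e => c * F e); split; last by rewrite ssubst_scal.
by move=> e he; rewrite hF ?mulr0.
Qed.
Lemma V_mul a b f g : Vset a f -> Vset b g -> Vset (a + b) (f * g).
Proof.
move=> [F [hF ->]] [G [hG ->]]; exists (mmul F G); split; last by rewrite ssubst_mul.
exact: mindeg_mul.
Qed.
Lemma V_le a b f : (b <= a)%N -> Vset a f -> Vset b f.
Proof.
move=> ba [F [hF ->]]; exists F; split => // e he; apply: hF; apply: leq_trans he ba.
Qed.
Lemma V_zero d : Vset d 0.
Proof. by exists (fun _ => 0); split; rewrite ?ssubst_zero. Qed.
Lemma V_vge d f : Vset d f -> val_ge f d.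
Proof. by move=> [F [hF ->]]; apply: vge_ssubst. Qed.
Lemma V_smonom (x : expo) : Vset (deg x) (smonom z x).
Proof.
exists (fun e => if e == x then 1 else 0); split; last by rewrite ssubst_delta.
by move=> e he; case: eqP => // hx; move: he; rewrite hx ltnn.
Qed.
Lemma V_sum d I (r : seq I) (P : pred I) (F : I -> fps) :
  (forall i, P i -> Vset d (F i)) -> Vset d (\sum_(i <- r | P i) F i).
Proof.
move=> h; elim/big_rec: _ => [|i x Pi hx]; first exact: V_zero.
by apply: V_add => //; apply: h.
Qed.

Definition zexp : expo := [ffun _ => 0%N].
Definition dexp (i : 'I_n) : expo := [ffun j => (j == i : nat)].
Lemma smonom0 : (smonom z zexp : fps) = 1.
Proof. by rewrite smonomE big1 // => i _; rewrite ffunE expr0. Qed.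
Lemma smonom_d i : (smonom z (dexp i) : fps) = z i.
Proof.
rewrite smonomE big_enum (bigD1 i) //= big1 ?mulr1; first by rewrite ffunE eqxx expr1.
by move=> j /negbTE hj; rewrite ffunE hj expr0.
Qed.
Lemma deg_zexp : deg zexp = 0%N.
Proof. by rewrite /deg big1 // => i _; rewrite ffunE. Qed.
Lemma deg_dexp i : deg (dexp i) = 1%N.
Proof. by rewrite /deg (bigD1 i) //= big1 ?ffunE ?eqxx // => j /negbTE hj; rewrite ffunE hj. Qed.
Lemma V_one : Vset 0 1.
Proof. by have := V_smonom zexp; rewrite smonom0 deg_zexp. Qed.
Lemma V_z i : Vset 1 (z i).
Proof. by have := V_smonom (dexp i); rewrite smonom_d deg_dexp. Qed.
Lemma V_scst c : Vset 0 (scst c).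
Proof. by rewrite -[scst c]mulr1; apply: V_scal; apply: V_one. Qed.
Lemma V_exp a f p : Vset a f -> Vset (a * p) (f ^+ p).
Proof.
move=> hf; elim: p => [|p ih]; first by rewrite muln0 expr0; apply: V_one.
by rewrite exprS mulnS; apply: V_mul.
Qed.

End MS.



Section Main.
Variables (k : fieldType) (R : series k -> Prop) (n : nat) (y yt : 'I_n -> series k) (an : nat).
Hypothesis hR : forall f, R f <-> in_kpow y f.
Hypothesis hbir : birational R.
Hypothesis hy : minimal_generators R y.
Hypothesis hanmax : forall a, herzog_kunz R a -> (a <= an)%N.
Hypothesis hytR : forall i, R (yt i).
Hypothesis hyt : forall i, val_ge (ssub (y i) (yt i)) an.+1.

Notation fps := (fps k).

Lemma y0 i : y i 0%N = 0.
Proof. by case: hy => h _; case: (h i). Qed.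

Lemma yt0 i : yt i 0%N = 0.
Proof.
have := @hyt i 0%N (ltn0Sn an); rewrite /ssub y0 sub0r => /eqP; rewrite oppr_eq0.
by move/eqP.
Qed.

Lemma RV f : R f <-> Vset y 0 f.
Proof.
rewrite hR; split.
  by move=> [F hF]; exists F; split => //; apply: funext.
by move=> [F [_ hF]]; exists F; rewrite hF.
Qed.

Lemma ssubst_at0 (z : 'I_n -> fps) (H : expo n -> k) : ssubst H z 0%N = H (zexp n).
Proof.
rewrite ssubstE /BS (bigD1 [ffun _ => ord0]) //= big1 ?addr0.
  have -> : ofo [ffun _ : 'I_n => (ord0 : 'I_1)] = zexp n by apply/ffunP => i; rewrite !ffunE.
  by rewrite smonom0 fps_oneE /sone mulr1.
move=> e /eqP []; apply/ffunP => i; rewrite ffunE; apply: val_inj; by case: (e i) => -[].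
Qed.


Lemma deg0 (e : expo n) : deg e = 0%N -> e = zexp n.
Proof.
move=> h; apply/ffunP => i; rewrite ffunE; by move: (deg_ge e i); rewrite h leqn0 => /eqP.
Qed.

Lemma mV1 f : maxideal R f -> Vset y 1 f.
Proof.
move=> [/RV [H [_ hH]] f0]; exists H; split => //.
move=> e; rewrite ltnS leqn0 => /eqP /deg0 ->.
by have := ssubst_at0 y H; rewrite -hH => <-.
Qed.

Lemma V1m f : Vset y 1 f -> maxideal R f.
Proof.
move=> hf; split; first by apply/RV; apply: V_le hf.
by apply: (V_vge y0 hf).
Qed.

Section Greedy.
Variables (C b : nat) (s : nat -> fps) (h : fps).
Hypothesis b1 : (0 < b)%N.
Hypothesis hs : forall j, has_val (s (C + j)) (C + j).
Hypothesis Vs : forall j, Vset y (j %/ b) (s (C + j)).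
Hypothesis hh : val_ge h C.

Definition lam (j : nat) (r : fps) : k := r (C + j)%N / s (C + j)%N (C + j)%N.
Fixpoint res (j : nat) : fps :=
  if j is j'.+1 then res j' - scst (lam j' (res j')) * s (C + j')%N else h.

Lemma res_vge j : val_ge (res j) (C + j).
Proof.
elim: j => [|j ih] /=; first by rewrite addn0.
move=> i; rewrite addnS ltnS leq_eqVlt => /orP [/eqP ->|hi].
  rewrite cfB cf_scst /lam mulfVK ?subrr //; last by case: (hs j).
rewrite cfB cf_scst ih // (proj1 (hs j)) // mulr0 subr0 //.
Qed.

Lemma res_tele J : h = \sum_(j < J) scst (lam j (res j)) * s (C + j)%N + res J.
Proof.
elim: J => [|J ih]; first by rewrite big_ord0 add0r.
by rewrite big_ord_recr /= {1}ih -addrA; congr (_ + _); rewrite addrC subrK.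
Qed.

Lemma greedy : Vset y 0 h.
Proof.
have [Hs hHs] : exists Hs : nat -> expo n -> k, forall j,
    mindeg (Hs j) (j %/ b) /\ s (C + j)%N = ssubst (Hs j) y.
  have hex : forall j : nat, exists H : expo n -> k, mindeg H (j %/ b) /\ s (C + j)%N = ssubst H y.
    by move=> j; case: (Vs j) => H [h1 h2]; exists H.
  by case: (boolp.choice hex) => f hf; exists f.
exists (fun e => \sum_(j < b * (deg e).+1) lam j (res j) * Hs j e); split => //.
apply: funext => m.
pose J := (b * m.+1)%N.
have mJ : (m < J)%N by rewrite /J -{1}[m.+1]mul1n leq_mul2r b1 orbT.
rewrite (@ssubst_trunc _ _ _ y0 _ (fun e => \sum_(j < J) lam j (res j) * Hs j e)); last first.
  move=> e he; rewrite (big_ord_widen J (fun j => lam j (res j) * Hs j e)); last first.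
    by rewrite leq_mul2l ltnS he orbT.
  rewrite big_rmcond //= => j; rewrite -leqNgt => hj.
  rewrite (proj1 (hHs j)) ?mulr0 //.
  by rewrite leq_divRL // mulnC.
rewrite (ssubst_sum y J (fun j e => lam j (res j) * Hs j e)) cf_sum.
rewrite {1}(res_tele J) cfD (@res_vge J m); last by apply: leq_trans mJ _; rewrite leq_addl.
rewrite addr0 cf_sum; apply: eq_bigr => j _.
by rewrite ssubst_scal -(proj2 (hHs j)).
Qed.
End Greedy.


Lemma has_val_exp (f : fps) a p : has_val f a -> has_val (f ^+ p) (a * p).
Proof.
move=> hf; elim: p => [|p ih].
  rewrite muln0 expr0; split => //; rewrite fps_oneE /sone /= oner_neq0 //.
by rewrite exprS mulnS; apply: has_val_mul.
Qed.

Lemma has_val_svar : has_val (svar k) 1.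
Proof. by split; [case=> // | rewrite /svar /= oner_neq0]. Qed.

Lemma conductor : exists C, (0 < C)%N /\ forall h : fps, val_ge h C -> Vset y 0 h.
Proof.
have [f [g [Rf [Rg [g0 fg]]]]] := hbir (svar k).
have fg' : f = (svar k : fps) * g by apply: funext.
have [i gi] : exists i, g i != 0.
  apply: contrapT => hn; apply: g0 => i; apply/eqP; apply: contrapT => /negP gi.
  by apply: hn; exists i.
have ex : exists i, g i != 0 by exists i.
case: (ex_minnP ex) => a ga amin.
have hg : has_val g a.
  split => // j ja; apply/eqP; apply: contrapT => /negP gj.
  by have := amin j gj; rewrite leqNgt ja.
have hf : has_val f (1 + a) by rewrite fg'; apply: has_val_mul => //; apply: has_val_svar.
have [u [w [b [b1 [Ru [Rw [hu hw]]]]]]] : exists (u w : fps) b, (0 < b)%N /\ R u /\ R w /\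
    has_val u b /\ has_val w b.+1.
  case: (posnP a) => a0.
    exists (f : fps), ((f : fps) * f), 1%N; split => //; split => //; split.
      by apply/RV; have Vf := proj1 (RV f) Rf; exact: (V_mul y0 Vf Vf).
    by split; [rewrite a0 in hf | have := has_val_mul hf hf; rewrite a0].
  by exists (g : fps), (f : fps), a; rewrite -add1n.
have mu : Vset y 1 u.
  apply: mV1; split => //; apply: (proj1 hu); done.
have mw : Vset y 1 w.
  apply: mV1; split => //; apply: (proj1 hw); done.
pose s := fun N => u ^+ (N %/ b - N %% b) * w ^+ (N %% b).
exists (b * b)%N; split; first by rewrite muln_gt0 b1.
move=> h hh; apply: (@greedy (b * b) b s h b1) => // j.
  set N := (b * b + j)%N.
  have hN : N = (N %/ b * b + N %% b)%N by apply: divn_eq.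
  have hr : (N %% b < b)%N by rewrite ltn_mod.
  have hQ : (b <= N %/ b)%N by rewrite leq_divRL // leq_addr.
  have := has_val_mul (has_val_exp (N %/ b - N %% b) hu) (has_val_exp (N %% b) hw).
  have -> : (b * (N %/ b - N %% b) + b.+1 * (N %% b))%N = N.
    move: hN hr hQ; set Q := (N %/ b)%N; set r := (N %% b)%N => hN hr hQ.
    have rQ : (r <= Q)%N by apply: ltnW; apply: leq_trans hr hQ.
    have bQ : (b * r <= b * Q)%N by rewrite leq_mul2l rQ orbT.
    rewrite [RHS]hN mulnBr mulSn; lia.
  by [].
set N := (b * b + j)%N.
have := V_mul y0 (V_exp y0 (N %/ b - N %% b) mu) (V_exp y0 (N %% b) mw).
rewrite !mul1n subnK; last first.
  apply: (@leq_trans b); [by apply: ltnW; rewrite ltn_mod | by rewrite leq_divRL // leq_addr].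
by apply: V_le; apply: leq_div2r; rewrite leq_addl.
Qed.


Definition M2 (g : fps) := exists s : seq (series k * series k),
  (forall p, List.In p s -> maxideal R p.1 /\ maxideal R p.2) /\
  g = \sum_(p <- s) (p.1 : fps) * p.2.

Lemma M2E g : maxideal2 R g <-> M2 g.
Proof.
have fE : forall s : seq (series k * series k),
    foldr (fun p acc => sadd (smul p.1 p.2) acc) (szero k) s = \sum_(p <- s) (p.1 : fps) * p.2.
  by elim=> [|p s ih] /=; rewrite ?big_nil ?big_cons -?ih.
split=> [[s [h1 h2]]|[s [h1 h2]]]; exists s; split => //.
  by rewrite -fE; apply: funext.
by rewrite h2 fE.
Qed.

Lemma M2_V2 g : M2 g -> Vset y 2 g.
Proof.
move=> [s [hs ->]]; elim: s hs => [|p s ih] hs; first by rewrite big_nil; apply: V_zero.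
rewrite big_cons; apply: V_add; last by apply: ih => q hq; apply: hs; right.
have [h1 h2] := hs p (or_introl erefl).
exact: (V_mul y0 (mV1 h1) (mV1 h2)).
Qed.

Lemma M2_m g : M2 g -> maxideal R g.
Proof. move=> /M2_V2 h; apply: V1m; exact: V_le h. Qed.

Lemma M2_add g1 g2 : M2 g1 -> M2 g2 -> M2 (g1 + g2).
Proof.
move=> [s1 [h1 ->]] [s2 [h2 ->]]; exists (s1 ++ s2); split; last by rewrite big_cat.
by move=> p hp; case: (List.in_app_or _ _ _ hp) => hq; [apply: h1 | apply: h2].
Qed.

Lemma m_scal c f : maxideal R f -> maxideal R (scst c * f).
Proof.
move=> hf; apply: V1m; apply: V_scal; exact: mV1.
Qed.

Lemma M2_scal c g : M2 g -> M2 (scst c * g).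
Proof.
move=> [s [hs ->]]; exists (map (fun p => ((scst c * p.1 : fps) : series k, p.2)) s); split.
  move=> p /List.in_map_iff [q [<- hq]] /=; have [h1 h2] := hs q hq.
  by split => //; apply: m_scal.
by rewrite big_map mulr_sumr; apply: eq_bigr => p _ /=; rewrite mulrA.
Qed.

Lemma M2_single f g : maxideal R f -> maxideal R g -> M2 ((f : fps) * g).
Proof.
move=> hf hg; exists [:: (f, g)]; split; last by rewrite big_cons big_nil addr0.
by move=> p [<-|[]].
Qed.

Lemma svar_mul (f : fps) m : ((svar k : fps) * f) m = if m is j.+1 then f j else 0.
Proof.
rewrite cfM big_ord_recl /svar /= mul0r add0r; case: m => [|m]; first by rewrite big_ord0.
rewrite big_ord_recl /= mul1r subSS subn0 big1 ?addr0 // => i _.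
by rewrite /bump /= mul0r.
Qed.

Lemma svar_shift C (f : fps) m : ((svar k : fps) ^+ C * f) m = if (C <= m)%N then f (m - C)%N else 0.
Proof.
elim: C f m => [|C ih] f m; first by rewrite expr0 mul1r subn0.
rewrite exprS -mulrA mulrCA ih svar_mul; case: (leqP C m) => hC.
  case: (ltnP C m) => hCm.
    by rewrite -(subnSK hCm).
  have -> : m = C by apply/eqP; rewrite eqn_leq hC hCm.
  by rewrite subnn.
by rewrite ltnNge (ltnW hC).
Qed.


Lemma factB g : maxideal R g -> val_ge g an.+1 -> M2 g.
Proof.
have [C [C0 hC]] := conductor.
have base : forall g : fps, maxideal R g -> val_ge g (C + C) -> M2 g.
  move=> g0 _ hg0.
  pose g' : fps := fun m => g0 (m + C)%N.
  have -> : g0 = (svar k : fps) ^+ C * g'.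
    apply: funext => m; rewrite svar_shift; case: leqP => hm.
      by rewrite /g' subnK.
    by rewrite hg0 //; apply: leq_trans hm _; rewrite leq_addl.
  apply: (@M2_single ((svar k : fps) ^+ C) g').
    split; first by apply/RV; apply: hC; have := has_val_exp C has_val_svar; rewrite mul1n; case.
    by have := has_val_exp C has_val_svar; rewrite mul1n => -[hv _]; apply: hv.
  split.
    apply/RV; apply: hC => j hj; rewrite /g' hg0 //; lia.
  by rewrite /g' add0n hg0 // -{1}[C]addn0 ltn_add2l.
suff : forall d g, maxideal R g -> val_ge g an.+1 -> val_ge g (C + C - d) -> M2 g.
  by move=> h hg hga; apply: (h (C + C)%N) => //; rewrite subnn.
elim=> [|d ih] g0 hm ha hv; first by apply: base => //; rewrite subn0 in hv.
case: (ltnP d (C + C)) => hd; last first.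
  apply: ih => //; have -> : (C + C - d = 0)%N by apply/eqP; rewrite subn_eq0.
  exact: vge0.
set v := (C + C - d.+1)%N.
have hvv : (C + C - d)%N = v.+1 by rewrite /v subnS prednK // subn_gt0.
case: (eqVneq (g0 v) 0) => gv.
  apply: ih => //; rewrite hvv => j; rewrite ltnS leq_eqVlt => /orP [/eqP ->|hj] //.
  by apply: hv.
have hav : (an < v)%N.
  rewrite ltnNge; apply/negP => hva; move: gv; rewrite ha ?eqxx //.
have [q [mq hq]] : in_valset (maxideal2 R) v.
  apply: contrapT => hn; have : ~~ (v <= an)%N by rewrite -ltnNge.
  move/negP; apply; apply: hanmax; split => //.
  by exists g0; split => //; split.
move/M2E: mq => mq.
pose c := g0 v / q v.
have -> : g0 = ((g0 : fps) - scst c * q) + scst c * q by rewrite subrK.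
apply: M2_add; last by apply: M2_scal.
apply: ih.
- apply: V1m; apply: V_sub; first exact: mV1.
  by apply: V_scal; apply: V_le (M2_V2 mq).
- apply: vge_sub => //; apply: vge_scst; apply: vge_le (proj1 hq) => //.
- rewrite hvv => j; rewrite ltnS leq_eqVlt => /orP [/eqP ->|hj].
    by rewrite cfB cf_scst /c mulfVK ?subrr //; case: hq.
  by rewrite cfB cf_scst hv ?(proj1 hq) // ?mulr0 ?subr0 // hvv ltnS ltnW.
Qed.


Lemma diff_mul (A B A' B' : fps) : A * B - A' * B' = A * (B - B') + (A - A') * B'.
Proof. by rewrite mulrBr mulrBl addrA subrK. Qed.

Lemma yt_V1 i : Vset y 1 (yt i).
Proof. by apply: mV1; split => //; apply: yt0. Qed.

Lemma d_V2 i : Vset y 2 ((y i : fps) - (yt i : fps)).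
Proof.
apply: M2_V2; apply: factB; last exact: hyt.
apply: V1m; apply: V_sub; [exact: (V_z y0 i) | exact: yt_V1].
Qed.

Lemma pow_diff i p : Vset y p.+1 ((y i : fps) ^+ p - (yt i : fps) ^+ p).
Proof.
elim: p => [|p ih]; first by rewrite !expr0 subrr; apply: V_zero.
rewrite !exprS diff_mul; apply: V_add.
  by have := V_mul y0 (V_z y0 i) ih; rewrite add1n.
have := V_mul y0 (d_V2 i) (V_exp y0 p (yt_V1 i)); rewrite mul1n addnC.
by rewrite addn2.
Qed.

Lemma prod_diff (x : expo n) (s : seq 'I_n) :
  Vset y (\sum_(i <- s) x i).+1 (\prod_(i <- s) (y i : fps) ^+ x i - \prod_(i <- s) (yt i : fps) ^+ x i)
  /\ Vset y (\sum_(i <- s) x i) (\prod_(i <- s) (yt i : fps) ^+ x i).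
Proof.
elim: s => [|i s [ih1 ih2]].
  by rewrite !big_nil subrr; split; [apply: V_zero | exact: (V_one y0)].
rewrite !big_cons; split.
  rewrite diff_mul; apply: V_add.
    have := V_mul y0 (V_exp y0 (x i) (V_z y0 i)) ih1; rewrite mul1n addnS //.
  by have := V_mul y0 (pow_diff i (x i)) ih2; rewrite addSn.
by have := V_mul y0 (V_exp y0 (x i) (yt_V1 i)) ih2; rewrite mul1n.
Qed.

Lemma smonom_diff (x : expo n) : Vset y (deg x).+1 ((smonom y x : fps) - (smonom yt x : fps)).
Proof. by rewrite !smonomE -deg_enum; case: (prod_diff x (enum 'I_n)). Qed.

Lemma smonom_yt (x : expo n) : Vset y (deg x) (smonom yt x).
Proof. by rewrite !smonomE -deg_enum; case: (prod_diff x (enum 'I_n)). Qed.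


Lemma scst0 : scst 0 = (0 : fps).
Proof. by apply: funext => m; rewrite /scst; case: (m == 0%N). Qed.

Definition homog (H : expo n -> k) (j : nat) (e : expo n) : k := if deg e == j then H e else 0.

Lemma step H j : mindeg H j -> exists H1, mindeg H1 j.+1 /\
  (ssubst H y : fps) = (ssubst (homog H j) yt : fps) + (ssubst H1 y : fps).
Proof.
move=> hH.
set P := homog H j.
have hP : forall e : expo n, (exists i, j.+1 <= e i)%N -> P e = 0.
  move=> e [i hi]; rewrite /P /homog; case: eqP => // hd.
  by move: (deg_ge e i); rewrite hd => hh; move: (leq_trans hi hh); rewrite ltnn.
have e1 : (ssubst H y : fps) = (ssubst P y : fps) + (ssubst (fun e => H e - P e) y : fps).
  by rewrite -ssubst_add; apply: ssubst_ext => e; rewrite addrC subrK.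
have V1 : Vset y j.+1 ((ssubst P y : fps) - (ssubst P yt : fps)).
  rewrite (ssubst_fin y0 hP) (ssubst_fin yt0 hP) -sumrB; apply: V_sum => e _.
  rewrite -mulrBr /P /homog; case: eqP => hd.
    by apply: V_scal; have := smonom_diff (ofo e); rewrite hd.
  by rewrite scst0 mul0r; apply: V_zero.
have V2 : Vset y j.+1 (ssubst (fun e => H e - P e) y).
  exists (fun e => H e - P e); split => // e he; rewrite /P /homog.
  case: eqP => hd; first by rewrite subrr.
  rewrite hH ?subr0 //; rewrite ltn_neqAle; apply/andP; split; first by apply/eqP.
  by rewrite -ltnS.
have [H1 [h1 h2]] := V_add V1 V2.
exists H1; split => //; rewrite -h2 e1.
rewrite addrA.
by congr (_ + _); rewrite addrC subrK.
Qed.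


Fixpoint iterH (nxt : (expo n -> k) * nat -> (expo n -> k)) (H : expo n -> k) (j : nat) :=
  if j is j'.+1 then nxt (iterH nxt H j', j') else H.

Lemma dirRS f : R f -> in_kpow yt f.
Proof.
move/RV => [H [_ hH]].
have hex : forall p : (expo n -> k) * nat, exists H1 : expo n -> k, mindeg p.1 p.2 ->
    mindeg H1 p.2.+1 /\ (ssubst p.1 y : fps) = (ssubst (homog p.1 p.2) yt : fps) + (ssubst H1 y : fps).
  move=> [H0 j] /=; case: (boolp.EM (mindeg H0 j)) => hm.
    by have [H1 h1] := step hm; exists H1.
  by exists H0.
have [nxt hnxt] := boolp.choice hex.
pose Hs := iterH nxt H.
have mHs : forall j, mindeg (Hs j) j.
  elim=> [|j ih] /=; first by move=> e.
  by have [] := hnxt (Hs j, j) ih.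
have tele : forall L, (ssubst H y : fps) =
    \sum_(j < L) (ssubst (homog (Hs j) j) yt : fps) + (ssubst (Hs L) y : fps).
  elim=> [|L ih]; first by rewrite big_ord0 add0r.
  rewrite big_ord_recr /= -addrA -(proj2 (hnxt (Hs L, L) (mHs L))) //.
exists (fun e => Hs (deg e) e) => m.
rewrite hH (tele m.+1) cfD (vge_ssubst y0 (mHs m.+1)) // addr0 cf_sum.
rewrite (@ssubst_trunc _ _ _ yt0 _ (fun e => \sum_(j < m.+1) homog (Hs j) j e)); last first.
  move=> e he; rewrite (bigD1 (Ordinal (he : (deg e < m.+1)%N))) //= big1 ?addr0.
    by rewrite /homog eqxx.
  move=> j hj; rewrite /homog; case: eqP => // hd; case/eqP: hj; apply: val_inj => /=.
  by rewrite hd.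
by rewrite (ssubst_sum yt m.+1 (fun j => homog (Hs j) j)) cf_sum.
Qed.

Lemma dirSR f : in_kpow yt f -> R f.
Proof.
move=> [F hF]; have -> : f = ssubst F yt by apply: funext.
have [[|C'] [C0 hC]] := conductor; first by [].
pose P := fun e => if (deg e < C'.+1)%N then F e else 0.
have -> : (ssubst F yt : fps) = (ssubst P yt : fps) + (ssubst (fun e => F e - P e) yt : fps).
  by rewrite -ssubst_add; apply: ssubst_ext => e; rewrite addrC subrK.
apply/RV; apply: V_add.
  have hP : forall e : expo n, (exists i, C'.+1 <= e i)%N -> P e = 0.
    move=> e [i hi]; rewrite /P; case: ltnP => // hd.
    by have := leq_trans hi (deg_ge e i); rewrite leqNgt hd.
  rewrite (ssubst_fin yt0 hP); apply: V_sum => e _; apply: V_scal.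
  exact: V_le (smonom_yt (ofo e)).
apply: hC; apply: (vge_ssubst yt0) => e he; rewrite /P he subrr //.
Qed.

End Main.

Unset Implicit Arguments.

Theorem mainTheorem14 (k : fieldType) (R : series k -> Prop) (n : nat)
  (y yt : 'I_n -> series k) (an : nat)
  (hR : forall f, R f <-> in_kpow y f)
  (hfin : finite_over R) (hbir : birational R)
  (hy : minimal_generators R y)
  (han : herzog_kunz R an) (hanmax : forall a, herzog_kunz R a -> (a <= an)%N)
  (hytR : forall i, R (yt i))
  (hyt : forall i, val_ge (ssub (y i) (yt i)) an.+1) :
  forall f, R f <-> in_kpow yt f.
Proof.
move=> f; split.
  exact: (dirRS hR hbir hy hanmax hytR hyt).
exact: (dirSR hR hbir hy hanmax hytR hyt).
Qed.
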